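(* Let $\Gamma$ be a signed graph on $n$ vertices and let $x=(x_1,\dots,x_n)^{\top}$ be a unit eigenvector of the adjacency matrix $A(\Gamma)$ corresponding to its largest eigenvalue $\lambda_1(\Gamma)$. Let $k$ be an integer. If $\lambda_1(\Gamma) > n-k$, then $x$ has at most $k-2$ zero components.
   Context: A signed graph $\Gamma=(G,\sigma)$ is a simple graph $G$ with a sign function $\sigma:E(G)\to\{-1,+1\}$. Its adjacency matrix $A(\Gamma)=(a_{ij})$ has $a_{ij}=\sigma(v_iv_j)$ if $v_i\sim v_j$ and $a_{ij}=0$ otherwise; $\lambda_1(\Gamma)$ denotes the largest eigenvalue of $A(\Gamma)$. *)

(* Defs.v *)
From HB Require Import structures.
From mathcomp Require Import all_boot all_order all_algebra.
From mathcomp Require Import reals.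
Set Implicit Arguments. Unset Strict Implicit. Unset Printing Implicit Defensive.
Import Order.TTheory GRing.Theory Num.Theory.
Local Open Scope ring_scope.

(* A signed graph on the vertex set 'I_n: a simple graph given by a symmetric
   irreflexive adjacency relation [e], together with a sign function on its
   edges, encoded as a symmetric map [neg] ([neg i j = true] means the edge
   ij has sign -1, otherwise +1; its values on non-edges are irrelevant). *)
Record signed_graph (n : nat) := SignedGraph {
  sg_adj : rel 'I_n;
  sg_neg : 'I_n -> 'I_n -> bool;
  sg_adj_sym : symmetric sg_adj;
  sg_adj_irr : irreflexive sg_adj;
  sg_neg_sym : forall i j, sg_neg i j = sg_neg j i
}.

Definition sg_adjmx (R : nzRingType) (n : nat) (G : signed_graph n) : 'M[R]_n :=
  \matrix_(i, j) (if sg_adj G i j then (if sg_neg G i j then -1 else 1) else 0).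

Definition largest_eigenvalue (R : realType) (n : nat) (A : 'M[R]_n) (l : R) :=
  eigenvalue A l /\ forall m, eigenvalue A m -> m <= l.

(* Main.v *)
Require Import Defs.
From HB Require Import structures.
From mathcomp Require Import all_boot all_order all_algebra.
From mathcomp Require Import reals.
From mathcomp Require Import zify.
Import Order.TTheory GRing.Theory Num.Theory.
Local Open Scope ring_scope.

Theorem lemma3p3 (R : realType) (n : nat) (G : signed_graph n)
    (lam1 : R) (x : 'cV[R]_n) (k : int) :
  largest_eigenvalue (sg_adjmx R G) lam1 ->
  sg_adjmx R G *m x = lam1 *: x ->
  \sum_(i < n) x i 0 ^+ 2 = 1 ->
  lam1 > n%:R - k%:~R ->
  (#|[set i : 'I_n | x i 0 == 0]|%:Z <= k - 2)%R.
Proof.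
move=> _ Heig Hsum Hlam.
case: n G x Heig Hsum Hlam => [|n] G x Heig Hsum Hlam.
  by move: Hsum; rewrite big_ord0 => /eqP; rewrite eq_sym oner_eq0.
set Z := [set i : 'I_n.+1 | x i 0 == 0].
set S := [set i : 'I_n.+1 | x i 0 != 0].
have HZS : (#|Z| + #|S| = n.+1)%N.
  have -> : S = ~: Z by apply/setP => j; rewrite !inE.
  by rewrite cardsC card_ord.
case: (@arg_maxP _ R _ ord0 xpredT (fun i => `|x i 0|)) => // i _ Hmax.
have Hmax' : forall j, `|x j 0| <= `|x i 0| by move=> j; exact: Hmax.
have xi0 : x i 0 != 0.
  apply/negP => /eqP xi0.
  have H0 : \sum_(j < n.+1) x j 0 ^+ 2 = 0.
    apply: big1 => j _.
    have := Hmax' j; rewrite xi0 normr0 normr_le0 => /eqP ->.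
    by rewrite expr0n.
  by move: Hsum; rewrite H0 => /eqP; rewrite eq_sym oner_eq0.
have iS : i \in S by rewrite inE.
have HS := cardsD1 i S; rewrite iS /= in HS.
set T := S :\ i in HS.
have Hrow : lam1 * x i 0 = \sum_j sg_adjmx R G i j * x j 0.
  have := congr1 (fun M : 'cV[R]_n.+1 => M i 0) Heig; rewrite /= !mxE => <-; done.
have Hb : `|lam1| * `|x i 0| <= #|T|%:R * `|x i 0|.
  rewrite -normrM Hrow.
  apply: le_trans (ler_norm_sum _ _ _) _.
  rewrite mulr_natl -sumr_const [X in _ <= X]big_mkcond /=.
  apply: ler_sum => j _.
  rewrite /T !inE.
  case: eqP => [->|/eqP ne] /=.
    by rewrite mxE (sg_adj_irr G) mul0r normr0.
  case: eqP => [->|_] /=; first by rewrite mulr0 normr0.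
  rewrite normrM.
  apply: le_trans _ (Hmax' j); rewrite ler_piMl //.
  by rewrite mxE; case: (sg_adj G i j); case: (sg_neg G i j); rewrite ?normrN ?normr1 ?normr0.
have Hl : lam1 <= #|T|%:R.
  apply: le_trans (ler_norm lam1) _.
  by rewrite -(ler_pM2r (x := `|x i 0|)) ?normr_gt0.
have Hlt : ((n.+1%:Z - k)%:~R < (#|T|%:Z)%:~R :> R).
  by rewrite rmorphB /= -!pmulrn; apply: lt_le_trans Hl.
rewrite ltr_int in Hlt.
move: Hlt HZS HS; move: #|Z| #|S| #|T| => a b c.
lia.
Qed.
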